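(* Let $\mu$ be a probability measure on a set $\mathcal{X}$ and let $k:\mathcal{X}\times\mathcal{X}\to\mathbb{R}$ be a positive-definite kernel with real RKHS $\mathcal{H}$, satisfying $\sup_{x\in\mathcal{X}}\sqrt{k(x,x)}\le\kappa$ for some $\kappa>0$, and admitting a Mercer expansion $k(x,y)=\sum_{j=1}^\infty \sigma_j e_j(x)e_j(y)$ for all $x,y\in\mathcal{X}$, where $(e_j)_{j\ge1}$ is an orthonormal set in $L^2(\mu)$ and $\sigma_1\ge\sigma_2\ge\cdots\ge0$. Fix an integer $d\ge1$ and define $\bm\Phi_d(x):=(\sqrt{\sigma_1}e_1(x),\dots,\sqrt{\sigma_d}e_d(x))^\top\in\mathbb{R}^d$, $g_d(x):=\sqrt{\sum_{j>d}\sigma_j e_j(x)^2}$, and $\bm\Psi_d(x):=(\bm\Phi_d(x)^\top,g_d(x))^\top\in\mathbb{R}^{d+1}$. Let $x_1,\dots,x_N\in\mathcal{X}$, let $\bm w=(w_i)_{i=1}^N\in\Delta_N$, and define $Q_N(f):=\sum_{i=1}^N w_i f(x_i)$. If \[ \Bigl|\mathbb{E}_{x\sim\mu}[\bm\Psi_d(x)]-\sum_{i=1}^N w_i\bm\Psi_d(x_i)\Bigr|\le\varepsilon \] for some $\varepsilon\ge0$, then \[ \operatorname{wce}(Q_N;\mathcal{H},\mu)\le 2\int g_d(x)\,\mathrm{d}\mu(x)+\varepsilon\le 2\sqrt{\sum_{j>d}\sigma_j}+\varepsilon . \]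
   Context: $\Delta_N:=\{\bm w\in\mathbb{R}^N_{\ge0}:\sum_{i=1}^N w_i=1\}$ is the probability simplex and $|\cdot|$ is the Euclidean norm. For a quadrature rule $Q_N(f)=\sum_i w_i f(x_i)$, the worst-case error is $\operatorname{wce}(Q_N;\mathcal{H},\mu):=\sup_{\|f\|_{\mathcal{H}}\le1}\bigl|\int f\,\mathrm{d}\mu-Q_N(f)\bigr|$, which equals $\bigl\|m_\mu-\sum_{i}w_ik(x_i,\cdot)\bigr\|_{\mathcal{H}}$ where $m_\mu:=\int k(x,\cdot)\,\mathrm{d}\mu(x)\in\mathcal{H}$ is the kernel mean embedding. *)

(* Defs.v *)
From HB Require Import structures.
From mathcomp Require Import all_boot all_order all_algebra.
From mathcomp Require Import all_classical all_reals all_analysis.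
Set Implicit Arguments. Unset Strict Implicit. Unset Printing Implicit Defensive.
Import Order.TTheory GRing.Theory Num.Theory.
Import numFieldNormedType.Exports.
Local Open Scope classical_set_scope.
Local Open Scope ring_scope.

Definition is_RKHS (R : realType) (X : Type) (k : X -> X -> R)
  (H : set (X -> R)) (ip : (X -> R) -> (X -> R) -> R) : Prop :=
  H (fun _ => 0) /\
      (forall f g, H f -> H g -> H (f \+ g)) /\
      (forall (a : R) f, H f -> H (fun x => a * f x)) /\
      (forall f g, H f -> H g -> ip f g = ip g f) /\
      (forall f g h, H f -> H g -> H h -> ip (f \+ g) h = ip f h + ip g h) /\
      (forall (a : R) f g, H f -> H g -> ip (fun x => a * f x) g = a * ip f g) /\
      (forall f, H f -> 0 <= ip f f) /\
      (forall f, H f -> ip f f = 0 -> f = (fun _ => 0)) /\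
      (forall x, H (k x)) /\
      (forall f x, H f -> f x = ip f (k x)) /\
      (forall u : nat -> X -> R, (forall n, H (u n)) ->
        (forall e : R, 0 < e -> exists N : nat, forall m n, (N <= m)%N -> (N <= n)%N ->
            ip (u m \- u n) (u m \- u n) < e) ->
        exists f, H f /\
          (forall e : R, 0 < e -> exists N : nat, forall n, (N <= n)%N ->
            ip (u n \- f) (u n \- f) < e)).

Definition pd_kernel (R : realType) (X : Type) (k : X -> X -> R) : Prop :=
  (forall x y, k x y = k y x) /\
  (forall (n : nat) (c : 'I_n -> R) (z : 'I_n -> X),
     0 <= \sum_(i < n) \sum_(j < n) c i * c j * k (z i) (z j)).

Definition wce (R : realType) (dX : measure_display) (X : measurableType dX)
  (mu : probability X R) (H : set (X -> R)) (ip : (X -> R) -> (X -> R) -> R)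
  (N : nat) (w : 'I_N -> R) (xs : 'I_N -> X) : \bar R :=
  ereal_sup [set `| (\int[mu]_x (f x)%:E - (\sum_(i < N) w i * f (xs i))%:E)%E |%E
            | f in [set f | H f /\ ip f f <= 1]].

(* g_d(x) = sqrt (sum_{j >= d} sigma_j e_j(x)^2)   (indices start at 0) *)
Definition gtail (R : realType) (X : Type) (sigma : nat -> R) (e : nat -> X -> R)
  (d : nat) (x : X) : R :=
  Num.sqrt (fine (\sum_(d <= j <oo) (sigma j * e j x ^+ 2)%:E)%E).

Definition Psi (R : realType) (X : Type) (sigma : nat -> R) (e : nat -> X -> R)
  (d : nat) (x : X) (j : 'I_d.+1) : R :=
  if (j < d)%N then Num.sqrt (sigma j) * e j x else gtail sigma e d x.

Definition eucl_norm (R : realType) (n : nat) (v : 'I_n -> R) : R :=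
  Num.sqrt (\sum_(i < n) v i ^+ 2).

Arguments Psi {R X} sigma e d x j.
Arguments eucl_norm {R} n v.

(* Main.v *)
Require Import Defs.
From HB Require Import structures.
From mathcomp Require Import all_boot all_order all_algebra.
From mathcomp Require Import all_classical all_reals all_analysis.
From mathcomp Require Import measurable_realfun.
From mathcomp Require Import ring lra.
Set Implicit Arguments. Unset Strict Implicit. Unset Printing Implicit Defensive.
Import Order.TTheory GRing.Theory Num.Theory.
Import numFieldNormedType.Exports.
Local Open Scope classical_set_scope.
Local Open Scope ring_scope.
Section Alg.
Variable R : realType.

Lemma quad_le (a b c : R) : 0 <= b ->
  (forall t : R, 0 <= c - 2 * t * a + t ^+ 2 * b) -> a ^+ 2 <= b * c.
Proof.
move=> b0 H.
have c0 : 0 <= c by have := H 0; rewrite mulr0 mul0r subr0 expr0n /= mul0r addr0.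
have [bp|] := ltrP 0 b.
  have := H (a / b).
  have -> : c - 2 * (a / b) * a + (a / b) ^+ 2 * b = c - a ^+ 2 / b.
    by field; rewrite gt_eqF.
  rewrite subr_ge0 ler_pdivrMr // => h; by rewrite mulrC.
move=> bl; have b00 : b = 0 by apply/eqP; rewrite eq_le bl b0.
subst b; rewrite mul0r.
have [a0|an0] := eqVneq a 0; first by rewrite a0 expr0n.
have := H ((c + 1) / (2 * a)).
have -> : c - 2 * ((c + 1) / (2 * a)) * a + ((c + 1) / (2 * a)) ^+ 2 * 0 = -1.
  by field.
by move=> h; exfalso; move: h; rewrite ler0N1.
Qed.

Lemma cs_sum (I : Type) (r : seq I) (P : pred I) (a b : I -> R) :
  (\sum_(i <- r | P i) a i * b i) ^+ 2 <=
  (\sum_(i <- r | P i) b i ^+ 2) * (\sum_(i <- r | P i) a i ^+ 2).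
Proof.
apply: quad_le; first by apply: sumr_ge0 => i _; exact: sqr_ge0.
move=> t.
have -> : \sum_(i <- r | P i) a i ^+ 2 - 2 * t * \sum_(i <- r | P i) a i * b i +
   t ^+ 2 * \sum_(i <- r | P i) b i ^+ 2 = \sum_(i <- r | P i) (a i - t * b i) ^+ 2.
  rewrite mulr_sumr [t ^+ 2 * _]mulr_sumr -sumrN -!big_split /=.
  by apply: eq_bigr => i _; ring.
by apply: sumr_ge0 => i _; exact: sqr_ge0.
Qed.

Lemma cs_sum_abs (I : Type) (r : seq I) (P : pred I) (a b : I -> R) :
  `|\sum_(i <- r | P i) a i * b i| <=
  Num.sqrt (\sum_(i <- r | P i) a i ^+ 2) * Num.sqrt (\sum_(i <- r | P i) b i ^+ 2).
Proof.
rewrite -sqrtrM; last by apply: sumr_ge0 => i _; exact: sqr_ge0.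
rewrite -sqrtr_sqr ler_sqrt; last by apply: mulr_ge0; apply: sumr_ge0 => i _; exact: sqr_ge0.
by rewrite mulrC; apply: cs_sum.
Qed.

End Alg.
Section RK.
Variables (R : realType) (X : Type) (k : X -> X -> R) (H : set (X -> R))
  (ip : (X -> R) -> (X -> R) -> R).
Hypothesis hR : is_RKHS k H ip.

Definition lin (u : X -> R) (a : R) (v : X -> R) : X -> R := fun x => u x + a * v x.

Lemma H_lin u a v : H u -> H v -> H (lin u a v).
Proof.
case: hR => _ [hD [hZ _]] hu hv; exact: hD (hZ _ _ hv).
Qed.

Lemma ip_sym u v : H u -> H v -> ip u v = ip v u.
Proof. by case: hR => _ [_ [_ [hs _]]]; apply: hs. Qed.

Lemma ip_linl u a v w : H u -> H v -> H w -> ip (lin u a v) w = ip u w + a * ip v w.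
Proof.
case: hR => _ [_ [hZ [_ [hA [hS _]]]]] hu hv hw.
have -> : lin u a v = (u \+ (fun x => a * v x)) by [].
by rewrite hA // ?hS //; apply: hZ.
Qed.

Lemma ip_linr u a v w : H u -> H v -> H w -> ip w (lin u a v) = ip w u + a * ip w v.
Proof.
move=> hu hv hw; rewrite ip_sym ?ip_linl ?(ip_sym hw) //; exact: H_lin.
Qed.

Lemma ip_ge0 u : H u -> 0 <= ip u u.
Proof. by case: hR => _ [_ [_ [_ [_ [_ [hp _]]]]]]; apply: hp. Qed.

Lemma ip_lin2 u a v : H u -> H v ->
  ip (lin u a v) (lin u a v) = ip u u + 2 * a * ip u v + a ^+ 2 * ip v v.
Proof.
move=> hu hv; have hl := H_lin a hu hv.
rewrite ip_linl // !ip_linr // (ip_sym hv hu); ring.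
Qed.

Lemma ip_cs u v : H u -> H v -> ip u v ^+ 2 <= ip v v * ip u u.
Proof.
move=> hu hv; apply: quad_le; first exact: ip_ge0.
move=> t; have := ip_ge0 (H_lin (- t) hu hv); rewrite ip_lin2 //.
by have -> : ip u u + 2 * - t * ip u v + (- t) ^+ 2 * ip v v =
   ip u u - 2 * t * ip u v + t ^+ 2 * ip v v by ring.
Qed.

Lemma H_k x : H (k x).
Proof. by case: hR => _ [_ [_ [_ [_ [_ [_ [_ [hk _]]]]]]]]; apply: hk. Qed.

Lemma repro f x : H f -> f x = ip f (k x).
Proof. by case: hR => _ [_ [_ [_ [_ [_ [_ [_ [_ [hr _]]]]]]]]]; apply: hr. Qed.

Lemma kxx_ip x : k x x = ip (k x) (k x).
Proof. exact/repro/H_k. Qed.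

Lemma kxx_ge0 x : 0 <= k x x.
Proof. rewrite kxx_ip; exact/ip_ge0/H_k. Qed.

Lemma f_sq_le f x : H f -> f x ^+ 2 <= ip f f * k x x.
Proof.
move=> hf; rewrite repro // kxx_ip mulrC; apply: ip_cs => //; exact: H_k.
Qed.

Lemma H0 : H (fun _ => 0).
Proof. by case: hR. Qed.

Definition spanf (l : seq (R * X)) : X -> R := fun y => \sum_(p <- l) p.1 * k p.2 y.

Lemma H_spanf l : H (spanf l).
Proof.
elim: l => [|p l IH].
  have -> : spanf [::] = (fun _ => 0) by apply: funext => y; rewrite /spanf big_nil.
  exact: H0.
have -> : spanf (p :: l) = lin (spanf l) p.1 (k p.2).
  by apply: funext => y; rewrite /spanf /lin big_cons addrC.
exact/H_lin/H_k.
Qed.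

Lemma spanf_lin l a l' :
  lin (spanf l) a (spanf l') = spanf (l ++ map (fun p => (a * p.1, p.2)) l').
Proof.
apply: funext => y; rewrite /lin /spanf big_cat big_map /= mulr_sumr.
by congr (_ + _); apply: eq_bigr => p _; rewrite mulrA.
Qed.

Lemma spanf_k x : k x = spanf [:: (1, x)].
Proof. by apply: funext => y; rewrite /spanf big_seq1 mul1r. Qed.

End RK.
Section RK2.
Variables (R : realType) (X : Type) (k : X -> X -> R) (H : set (X -> R))
  (ip : (X -> R) -> (X -> R) -> R).
Hypothesis hR : is_RKHS k H ip.

Lemma near_min f r : H f -> 0 < r -> exists l,
  (forall x, (f x - spanf k l x) ^+ 2 <= r ^+ 2 * k x x) /\
  ip (spanf k l) (spanf k l) <= ip f f + 2 * r * Num.sqrt (ip (spanf k l) (spanf k l)).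
Proof.
move=> hf r0.
pose nf l := ip (lin f (-1) (spanf k l)) (lin f (-1) (spanf k l)).
pose E := [set y | exists l, y = nf l].
have hlb : has_lbound E.
  exists 0 => y [l ->]; apply: (ip_ge0 hR) => //; apply: (H_lin hR) => //; exact: (H_spanf hR).
have hinf : has_inf E by split => //; exists (nf [::]), [::].
have [e [l0 ->] he] := inf_adherent (mulr_gt0 r0 r0) hinf.
exists l0.
set s0 := spanf k l0; set u := lin f (-1) s0.
have hs0 : H s0 by exact: (H_spanf hR).
have hu : H u by exact: (H_lin hR).
have key : forall l', ip u (spanf k l') ^+ 2 <= ip (spanf k l') (spanf k l') * (r ^+ 2).
  move=> l'; have hs' := H_spanf hR l'.
  apply: quad_le; first exact: (ip_ge0 hR).
  move=> t.
  have h1 := ge_inf hlb (ex_intro _ (l0 ++ map (fun p => (t * p.1, p.2)) l') erefl).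
  have eq1 : lin f (-1) (spanf k (l0 ++ [seq (t * p.1, p.2) | p <- l'])) = lin u (- t) (spanf k l').
    rewrite -spanf_lin; apply: funext => y; rewrite /u /lin /s0 /=; ring.
  move: h1; rewrite /nf eq1 (ip_lin2 hR) // => h1.
  have : nf l0 - r * r < ip u u + 2 * - t * ip u (spanf k l') + (- t) ^+ 2 * ip (spanf k l') (spanf k l').
    by apply: (lt_le_trans _ h1); rewrite ltrBlDr.
  rewrite /nf -/s0 -/u => h2.
  apply/ltW; move: h2; rewrite -subr_gt0 => h2; rewrite expr2.
  by have -> : r * r - 2 * t * ip u (spanf k l') + t ^+ 2 * ip (spanf k l') (spanf k l') =
    ip u u + 2 * - t * ip u (spanf k l') + (- t) ^+ 2 * ip (spanf k l') (spanf k l') - (ip u u - r * r) by ring.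
split.
  move=> x; have := key [:: (1, x)]; rewrite -spanf_k -(repro hR) //.
  by rewrite -(kxx_ip hR) => h; rewrite mulrC; apply: le_trans h; rewrite /u /lin mulN1r.
have := key l0; rewrite -/s0 => k0.
have ha : `|ip u s0| <= r * Num.sqrt (ip s0 s0).
  have -> : r * Num.sqrt (ip s0 s0) = Num.sqrt (ip s0 s0 * r ^+ 2).
    by rewrite sqrtrM ?(ip_ge0 hR) // sqrtr_sqr ger0_norm ?ltW // mulrC.
  by rewrite -sqrtr_sqr ler_sqrt // mulr_ge0 ?sqr_ge0 ?(ip_ge0 hR).
have ef : f = lin u 1 s0 by apply: funext => y; rewrite /u /lin /=; ring.
have : ip s0 s0 + 2 * ip u s0 <= ip f f.
  rewrite {1 2}ef (ip_lin2 hR) // expr1n mul1r mulr1.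
  have := ip_ge0 hR hu; lra.
have := ler_norm (- ip u s0); rewrite normrN.
move=> h3 h4; lra.
Qed.

End RK2.
Lemma abs_le_sq (R : realType) (a b : R) : 0 <= b -> a ^+ 2 <= b ^+ 2 -> `|a| <= b.
Proof.
move=> b0 h; rewrite -sqrtr_sqr -(ger0_norm b0) -sqrtr_sqr ler_sqrt //; exact: sqr_ge0.
Qed.

Section Main.
Variables (R : realType) (dX : measure_display) (X : measurableType dX)
  (mu : probability X R) (k : X -> X -> R)
  (H : set (X -> R)) (ip : (X -> R) -> (X -> R) -> R) (kappa : R)
  (sigma : nat -> R) (e : nat -> X -> R).
Hypotheses (hR : is_RKHS k H ip) (kap0 : 0 < kappa)
  (hk : forall x, Num.sqrt (k x x) <= kappa)
  (hem : forall j, measurable_fun setT (e j))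
  (he2 : forall j, mu.-integrable setT (fun x => (e j x ^+ 2)%:E))
  (hort : forall i j, (\int[mu]_x (e i x * e j x)%:E = ((i == j)%:R)%:E)%E)
  (hs0 : forall j, 0 <= sigma j)
  (hmer : forall x y, (fun n => \sum_(0 <= j < n) sigma j * e j x * e j y) @ \oo --> k x y).

Definition intg (f : X -> R) := mu.-integrable setT (EFin \o f).
Definition Rint (f : X -> R) := Rintegral mu setT f.
Definition P n x y := \sum_(0 <= j < n) sigma j * e j x * e j y.
Definition Dg n x := P n x x.

Lemma kxx_le x : k x x <= kappa ^+ 2.
Proof.
have h0 := kxx_ge0 hR x; have := hk x; have := sqr_sqrtr h0.
have := sqrtr_ge0 (k x x); set s := Num.sqrt _ => s0 hs hsk; rewrite -hs; nra.
Qed.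

Lemma Dg_ge0 n x : 0 <= Dg n x.
Proof.
by apply: sumr_ge0 => j _; rewrite -mulrA mulr_ge0 // -expr2 sqr_ge0.
Qed.

Lemma Dg_mono x : {homo (fun n => Dg n x) : n m / (n <= m)%N >-> n <= m}.
Proof.
move=> n m nm; rewrite /Dg /P (big_cat_nat (leq0n n) nm) /= lerDl.
by apply: sumr_ge0 => j _; rewrite -mulrA mulr_ge0 // -expr2 sqr_ge0.
Qed.

Lemma Dg_le n x : Dg n x <= k x x.
Proof.
have hc : cvgn (fun n => Dg n x) by apply/cvg_ex; exists (k x x); exact: (@hmer x x).
have := nondecreasing_cvgn_le (@Dg_mono x) hc n.
by rewrite (cvg_lim _ (@hmer x x)).
Qed.

Lemma sqrt_Dg_le n x : Num.sqrt (Dg n x) <= kappa.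
Proof.
apply: le_trans (hk x); rewrite ler_sqrt ?Dg_le //; exact: (kxx_ge0 hR).
Qed.

Lemma P_abs_le n x y : `|P n x y| <= kappa ^+ 2.
Proof.
have -> : P n x y = \sum_(0 <= j < n) (Num.sqrt (sigma j) * e j x) * (Num.sqrt (sigma j) * e j y).
  apply: eq_bigr => j _.
  by rewrite mulrACA -expr2 sqr_sqrtr // mulrA.
apply: le_trans (cs_sum_abs _ _ _ _) _.
have E z : \sum_(0 <= j < n) (Num.sqrt (sigma j) * e j z) ^+ 2 = Dg n z.
  apply: eq_bigr => j _; by rewrite exprMn sqr_sqrtr // expr2 mulrA.
rewrite !E expr2; apply: ler_pM; try exact: sqrtr_ge0; exact: sqrt_Dg_le.
Qed.

Lemma k_abs_le x y : `|k x y| <= kappa ^+ 2.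
Proof.
apply: abs_le_sq; first exact: sqr_ge0.
have := f_sq_le hR y (H_k hR x); rewrite -(kxx_ip hR) => h; apply: le_trans h _.
rewrite expr2; apply: ler_pM; [exact: (kxx_ge0 hR)|exact: (kxx_ge0 hR)|exact: kxx_le|exact: kxx_le].
Qed.

Lemma P_meas n x : measurable_fun setT (P n x).
Proof.
apply: measurable_sum => j; apply: measurable_realfun.measurable_funM => //; exact: measurable_cst.
Qed.

Lemma k_meas x : measurable_fun setT (k x).
Proof.
apply: (measurable_realfun.measurable_fun_cvg (h := fun n => P n x)). move=> m /=; exact: P_meas.
move=> y _; rewrite /P; exact: (@hmer x y).
Qed.

Lemma kdiag_meas : measurable_fun setT (fun x => k x x).
Proof.
apply: (measurable_realfun.measurable_fun_cvg (h := fun n => Dg n)).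
  move=> n; apply: measurable_sum => j; apply: measurable_realfun.measurable_funM => //.
  apply: measurable_realfun.measurable_funM => //; exact: measurable_cst.
move=> y _; rewrite /Dg /P; exact: (@hmer y y).
Qed.

Lemma bdd_intg (f : X -> R) (M : R) : measurable_fun setT f -> (forall x, `|f x| <= M) -> intg f.
Proof.
move=> mf hM; apply: measurable_bounded_integrable => //.
  apply: (@le_lt_trans _ _ 1%E); last exact: ltry.
  by rewrite -(probability_setT mu).
exists M; split; first by rewrite num_real.
by move=> r Mr x _; apply: le_trans (hM x) (ltW Mr).
Qed.

Lemma lim_abs_le (u : nat -> R) (l M : R) : u @ \oo --> l -> (forall n, `|u n| <= M) -> `|l| <= M.
Proof.
move=> hu hb; have cn : `|u n| @[n --> \oo] --> `|l| by exact: cvg_norm.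
rewrite -(cvg_lim _ cn) //; apply: limr_le; first by apply/cvg_ex; exists `|l|.
exact: nearW.
Qed.

Lemma lim_le_gen (u : nat -> R) (l M : R) : u @ \oo --> l -> (forall n, u n <= M) -> l <= M.
Proof.
move=> hu hb; rewrite -(cvg_lim _ hu) //; apply: limr_le; first by apply/cvg_ex; exists l.
exact: nearW.
Qed.

Lemma intg_meas f : intg f -> measurable_fun setT f.
Proof. by move=> h; apply/measurable_realfun.measurable_EFinP; exact: measurable_int h. Qed.

Lemma intgD f g : intg f -> intg g -> intg (f \+ g).
Proof.
move=> hf hg; rewrite /intg; have -> : EFin \o (f \+ g) = ((EFin \o f) \+ (EFin \o g))%E.
  by apply: funext => x; rewrite /= EFinD.
exact: integrableD.
Qed.

Lemma intgZ c f : intg f -> intg (fun x => c * f x).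
Proof.
move=> hf; rewrite /intg; have -> : EFin \o (fun x => c * f x) = (fun x => c%:E * (EFin \o f) x)%E.
  by apply: funext => x; rewrite /= EFinM.
exact: integrableZl.
Qed.

Lemma intg_cst c : intg (fun _ => c).
Proof. exact: finite_measure_integrable_cst. Qed.

Lemma RintZ c f : intg f -> Rint (fun x => c * f x) = c * Rint f.
Proof. by move=> hf; rewrite /Rint RintegralZl. Qed.

Lemma Rint_cst c : Rint (fun _ => c) = c.
Proof.
rewrite /Rint Rintegral_cst //.
transitivity (c * fine (1%E : \bar R)); last by rewrite mulr1.
by congr (_ * fine _); rewrite -(probability_setT mu).
Qed.

Lemma intg_sum (I : Type) (r : seq I) (F : I -> X -> R) : (forall i, intg (F i)) ->
  intg (fun x => \sum_(i <- r) F i x) /\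
  Rint (fun x => \sum_(i <- r) F i x) = \sum_(i <- r) Rint (F i).
Proof.
move=> hF; elim: r => [|i r [IH1 IH2]].
  have -> : (fun x => \sum_(i <- [::]) F i x) = (fun _ => 0).
    by apply: funext => x; rewrite big_nil.
  by rewrite big_nil; split; [exact: intg_cst | rewrite Rint_cst].
have -> : (fun x => \sum_(j <- i :: r) F j x) = F i \+ (fun x => \sum_(j <- r) F j x).
  by apply: funext => x; rewrite big_cons.
split; first exact: intgD.
rewrite big_cons -IH2 /Rint RintegralD //. all: try exact: hF. all: try exact: IH1.
Qed.

Lemma Rint_cvg (h : nat -> X -> R) (f : X -> R) M :
  (forall n, measurable_fun setT (h n)) -> measurable_fun setT f ->
  (forall n x, `|h n x| <= M) -> (forall x, h ^~ x @ \oo --> f x) ->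
  (fun n => Rint (h n)) @ \oo --> Rint f.
Proof.
move=> mh mf hb hc.
have hfb x : `|f x| <= M by apply: (lim_abs_le (hc x)) => n; exact: hb.
have intf : intg f by exact: bdd_intg mf hfb.
have mhE n : measurable_fun setT (EFin \o h n) by apply/measurable_realfun.measurable_EFinP.
have mfE : measurable_fun setT (EFin \o f) by apply/measurable_realfun.measurable_EFinP.
have hcv : forall x, setT x -> (EFin \o h n) x @[n --> \oo] --> (EFin \o f) x.
  move=> x _; apply/fine_cvgP; split; first exact: nearW.
  exact: hc.
have hbd : forall n x, setT x -> (`|(EFin \o h n) x| <= (cst M%:E) x)%E.
  by move=> n x _; change (`|(h n x)%:E| <= M%:E)%E; rewrite abse_EFin lee_fin.
have hfin : forall x : X, setT x -> (cst M%:E) x \is a fin_num by [].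
have H1 := dominated_cvg measurableT mhE hcv hfin (intg_cst M) hbd.
have : (\int[mu]_(x in setT) (EFin \o h n) x)%E @[n --> \oo] --> (Rint f)%:E.
  rewrite /Rint /Rintegral fineK; last exact: integrable_fin_num.
  exact: H1.
by move/fine_cvg.
Qed.

Lemma cvg_bigsum (I : Type) (r : seq I) (u : I -> nat -> R) (L : I -> R) :
  (forall i, u i @ \oo --> L i) ->
  (fun n => \sum_(i <- r) u i n) @ \oo --> \sum_(i <- r) L i.
Proof.
move=> hu; elim: r => [|i r IH].
  rewrite big_nil; under eq_fun do rewrite big_nil; exact: cvg_cst.
rewrite big_cons; under eq_fun do rewrite big_cons.
exact: cvgD.
Qed.

Lemma intg_e j : intg (e j).
Proof.
have hg : intg (fun x => 1 + e j x ^+ 2).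
  apply: (intgD (intg_cst 1)); exact: he2.
rewrite /intg; apply: le_integrable hg => //.
  by apply/measurable_realfun.measurable_EFinP.
move=> x _; change (`|(e j x)%:E| <= `|(1 + e j x ^+ 2)%:E|)%E; rewrite !abse_EFin lee_fin.
have h := sqr_ge0 (e j x); rewrite (ger0_norm (addr_ge0 ler01 h)).
case: (lerP 0 (e j x)) => hx; [rewrite ger0_norm // | rewrite ltr0_norm //]; nra.
Qed.

Lemma Rint_e2 j : Rint (fun x => e j x * e j x) = 1.
Proof. by rewrite /Rint /Rintegral hort eqxx. Qed.

Lemma intg_e2 j : intg (fun x => e j x * e j x).
Proof.
rewrite /intg; have -> : EFin \o (fun x => e j x * e j x) = (fun x => (e j x ^+ 2)%:E).
  by apply: funext => x; rewrite /= expr2.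
exact: he2.
Qed.

Variables (d N : nat) (xs : 'I_N -> X) (w : 'I_N -> R).
Hypothesis hw0 : forall i, 0 <= w i.

Definition Delta (f : X -> R) := Rint f - \sum_(i < N) w i * f (xs i).
Definition m j := Delta (e j).

Lemma intg_k z : intg (k z).
Proof. exact: (bdd_intg (k_meas z) (k_abs_le z)). Qed.

Lemma intg_P n z : intg (P n z).
Proof.
rewrite /P; have [h _] := @intg_sum _ (index_iota 0 n) (fun j y => sigma j * e j z * e j y)
  (fun j => intgZ (sigma j * e j z) (intg_e j)).
exact: h.
Qed.

Lemma Rint_P n z : Rint (P n z) = \sum_(0 <= j < n) sigma j * e j z * Rint (e j).
Proof.
rewrite /P; have [_ ->] := @intg_sum _ (index_iota 0 n) (fun j y => sigma j * e j z * e j y)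
  (fun j => intgZ (sigma j * e j z) (intg_e j)).
by apply: eq_bigr => j _; rewrite RintZ //; exact: intg_e.
Qed.

Lemma Delta_P n z : Delta (P n z) = \sum_(0 <= j < n) sigma j * e j z * m j.
Proof.
rewrite /Delta Rint_P /m /Delta.
have -> : \sum_(i < N) w i * P n z (xs i) =
   \sum_(0 <= j < n) sigma j * e j z * \sum_(i < N) w i * e j (xs i).
  transitivity (\sum_(i < N) \sum_(0 <= j < n) w i * (sigma j * e j z * e j (xs i))).
    by apply: eq_bigr => i _; rewrite /P mulr_sumr.
  rewrite exchange_big /=; apply: eq_bigr => j _; rewrite mulr_sumr.
  by apply: eq_bigr => i _; ring.
by rewrite -sumrB; apply: eq_bigr => j _; rewrite mulrBr.
Qed.

Lemma Delta_k_cvg z :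
  (fun n => \sum_(0 <= j < n) sigma j * e j z * m j) @ \oo --> Delta (k z).
Proof.
under eq_fun do rewrite -Delta_P.
rewrite /Delta; apply: cvgB.
  apply: (@Rint_cvg _ _ (kappa ^+ 2)) => //.
  - by move=> n; exact: P_meas.
  - exact: k_meas.
  - by move=> n x; exact: P_abs_le.
  - by move=> y; rewrite /P; exact: (@hmer z y).
apply: cvg_bigsum => i; apply: cvgM; first exact: cvg_cst.
rewrite /P; exact: (@hmer z (xs i)).
Qed.

Lemma spanf_eq l y : spanf k l y = \sum_(p <- l) p.1 * k p.2 y.
Proof. by []. Qed.

Lemma intg_spanf l : intg (spanf k l).
Proof.
have [h _] := @intg_sum _ l (fun p y => p.1 * k p.2 y) (fun p => intgZ p.1 (intg_k p.2)).
exact: h.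
Qed.

Lemma Delta_spanf l : Delta (spanf k l) = \sum_(p <- l) p.1 * Delta (k p.2).
Proof.
rewrite /Delta /spanf.
have [_ ->] := @intg_sum _ l (fun p y => p.1 * k p.2 y) (fun p => intgZ p.1 (intg_k p.2)).
transitivity (\sum_(p <- l) Rint (fun y => p.1 * k p.2 y) -
   \sum_(p <- l) \sum_(i < N) w i * (p.1 * k p.2 (xs i))).
  congr (_ - _); rewrite exchange_big /=; apply: eq_bigr => i _; exact: mulr_sumr.
rewrite -sumrB; apply: eq_bigr => p _.
rewrite RintZ ?mulrBr; last exact: intg_k.
by congr (_ - _); rewrite mulr_sumr; apply: eq_bigr => i _; ring.
Qed.

Lemma spanf_cons p l : spanf k (p :: l) = lin (spanf k l) p.1 (k p.2).
Proof. by apply: funext => y; rewrite /spanf /lin big_cons addrC. Qed.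

Lemma ip_spanf_l l g : H g -> ip (spanf k l) g = \sum_(p <- l) p.1 * g p.2.
Proof.
move=> hg; elim: l => [|p l IH].
  rewrite big_nil.
  have h0 : spanf k [::] = lin (spanf k [::]) 1 (spanf k [::]).
    by apply: funext => y; rewrite /spanf /lin big_nil mul1r addr0.
  have hsn := H_spanf hR [::].
  have := ip_linl hR 1 hsn hsn hg; rewrite -h0 mul1r; lra.
rewrite spanf_cons (ip_linl hR) ?IH ?big_cons; first by rewrite addrC -(ip_sym hR) ?(repro hR) //; exact: (H_k hR).
- exact: (H_spanf hR).
- exact: (H_k hR).
- exact: hg.
Qed.

Lemma Delta_lin (r : seq nat) (c : nat -> R) :
  Delta (fun y => \sum_(j <- r) c j * e j y) = \sum_(j <- r) c j * m j.
Proof.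
rewrite /Delta.
have [_ ->] := @intg_sum _ r (fun j y => c j * e j y) (fun j => intgZ (c j) (intg_e j)).
transitivity (\sum_(j <- r) Rint (fun y => c j * e j y) -
   \sum_(j <- r) \sum_(i < N) w i * (c j * e j (xs i))).
  congr (_ - _); rewrite exchange_big /=; apply: eq_bigr => i _; exact: mulr_sumr.
rewrite -sumrB; apply: eq_bigr => j _.
rewrite RintZ ?mulrBr /m /Delta; last exact: intg_e.
by congr (_ - _); rewrite mulr_sumr; apply: eq_bigr => i _; ring.
Qed.

Lemma intg_lin (r : seq nat) (c : nat -> R) : intg (fun y => \sum_(j <- r) c j * e j y).
Proof.
by have [h _] := @intg_sum _ r (fun j y => c j * e j y) (fun j => intgZ (c j) (intg_e j)).
Qed.

Lemma ES (a : nat -> R) (L : R) (d0 : nat) :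
  (fun n => \sum_(0 <= j < n) a j) @ \oo --> L ->
  (\sum_(d0 <= j <oo) (a j)%:E)%E = (L - \sum_(0 <= j < d0) a j)%:E.
Proof.
move=> hL.
have h1 : (fun n => ((\sum_(0 <= j < n) a j) - \sum_(0 <= j < d0) a j)%:E) @ \oo -->
   (L - \sum_(0 <= j < d0) a j)%:E.
  apply/fine_cvgP; split; first exact: nearW.
  exact: (cvgB hL (cvg_cst _)).
have hc : (fun n => \sum_(d0 <= j < n) (a j)%:E)%E @ \oo --> (L - \sum_(0 <= j < d0) a j)%:E.
  apply: cvg_trans h1; apply: near_eq_cvg.
  apply: filterS (nbhs_infty_ge d0) => n hn /=.
  rewrite sumEFin (big_cat_nat (leq0n d0) hn) /=; congr EFin; ring.
exact: (cvg_lim (@ereal_hausdorff _) hc).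
Qed.

Definition gt y := gtail sigma e d y.

Lemma gt_eq y : gt y = Num.sqrt (k y y - Dg d y).
Proof.
rewrite /gt /gtail (@ES (fun j => sigma j * e j y ^+ 2) (k y y)).
  rewrite /Dg /P /=; congr Num.sqrt; congr (_ - _).
  by apply: eq_bigr => j _; rewrite expr2 mulrA.
have -> : (fun n => \sum_(0 <= j < n) sigma j * e j y ^+ 2) =
   (fun n => \sum_(0 <= j < n) sigma j * e j y * e j y).
  by apply: funext => n; apply: eq_bigr => j _; rewrite expr2 mulrA.
exact: (@hmer y y).
Qed.

Lemma gt_ge0 y : 0 <= gt y.
Proof. by rewrite gt_eq sqrtr_ge0. Qed.

Lemma gt_sq y : gt y ^+ 2 = k y y - Dg d y.
Proof. by rewrite gt_eq sqr_sqrtr // subr_ge0 Dg_le. Qed.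

Lemma gt_le y : gt y <= kappa.
Proof.
rewrite gt_eq; apply: le_trans (hk y); rewrite ler_sqrt ?(kxx_ge0 hR) //.
by rewrite gerBl Dg_ge0.
Qed.

Lemma Dg_meas n : measurable_fun setT (Dg n).
Proof.
apply: measurable_sum => j; apply: measurable_realfun.measurable_funM => //.
apply: measurable_realfun.measurable_funM => //; exact: measurable_cst.
Qed.

Lemma gt_meas : measurable_fun setT gt.
Proof.
have -> : gt = Num.sqrt \o (fun y => k y y - Dg d y) by apply: funext => y; rewrite gt_eq.
apply: measurableT_comp; first exact: continuous_measurable_fun (@sqrt_continuous R).
apply: measurable_realfun.measurable_funB; [exact: kdiag_meas | exact: Dg_meas].
Qed.

Lemma intg_gt : intg gt.
Proof.
apply: (bdd_intg gt_meas) => y; rewrite ger0_norm ?gt_ge0 //; exact: gt_le.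
Qed.

Lemma tail_bound n : (d <= n)%N ->
  Num.sqrt (\sum_(d <= j < n) sigma j * m j ^+ 2) <= Rint gt + \sum_(i < N) w i * gt (xs i).
Proof.
move=> dn.
set Q := \sum_(d <= j < n) sigma j * m j ^+ 2.
set T := Rint gt + _.
pose phi y := \sum_(d <= j < n) (sigma j * m j) * e j y.
have hQ : Q = Delta phi.
  rewrite /phi Delta_lin; apply: eq_bigr => j _; by rewrite expr2 mulrA.
have Q0 : 0 <= Q by apply: sumr_ge0 => j _; rewrite mulr_ge0 ?sqr_ge0.
have hphi y : `|phi y| <= Num.sqrt Q * gt y.
  have -> : phi y = \sum_(d <= j < n) (Num.sqrt (sigma j) * m j) * (Num.sqrt (sigma j) * e j y).
    apply: eq_bigr => j _; by rewrite mulrACA -expr2 (sqr_sqrtr (hs0 j)) mulrA.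
  apply: le_trans (cs_sum_abs _ _ _ _) _.
  have -> : \sum_(d <= j < n) (Num.sqrt (sigma j) * m j) ^+ 2 = Q.
    by apply: eq_bigr => j _; rewrite exprMn sqr_sqrtr.
  apply: ler_wpM2l; first exact: sqrtr_ge0.
  rewrite gt_eq ler_sqrt; last by rewrite subr_ge0 Dg_le.
  have -> : \sum_(d <= j < n) (Num.sqrt (sigma j) * e j y) ^+ 2 = Dg n y - Dg d y.
    rewrite /Dg /P (big_cat_nat (leq0n d) dn) /= addrC addrK.
    by apply: eq_bigr => j _; rewrite exprMn sqr_sqrtr // expr2 mulrA.
  by rewrite lerD2r Dg_le.
have T0 : 0 <= T.
  apply: addr_ge0; first by apply: Rintegral_ge0 => y _; exact: gt_ge0.
  by apply: sumr_ge0 => i _; rewrite mulr_ge0 ?gt_ge0.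
have hQT : Q <= Num.sqrt Q * T.
  rewrite {1}hQ /Delta /T mulrDr; apply: lerD.
    rewrite -RintZ; last exact: intg_gt.
    rewrite /Rint; apply: le_Rintegral => //.
    - exact: intg_lin.
    - exact: (intgZ _ intg_gt).
    - by move=> y _; apply: le_trans (ler_norm _) (hphi y).
  rewrite mulr_sumr -sumrN; apply: ler_sum => i _.
  rewrite -mulrN mulrCA; apply: ler_wpM2l => //.
  apply: le_trans (hphi (xs i)); rewrite -normrN; exact: ler_norm.
have sq := sqr_sqrtr Q0.
have s0 := sqrtr_ge0 Q.
move: hQT; rewrite -{1}sq; move: (Num.sqrt Q) s0 => s s0 h.
have [sp|sle] := ltrP 0 s; first by rewrite expr2 ler_pM2l in h.
exact: le_trans sle T0.
Qed.
Lemma comb_le (b1 b2 u t C : R) : 0 <= b1 -> 0 <= b2 -> 0 <= u -> 0 <= t -> 0 <= C ->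
  u ^+ 2 + t ^+ 2 <= C ^+ 2 -> b1 * u + b2 * t <= Num.sqrt (b1 ^+ 2 + b2 ^+ 2) * C.
Proof.
move=> h1 h2 hu ht hC hut.
have S0 : 0 <= b1 ^+ 2 + b2 ^+ 2 by rewrite addr_ge0 ?sqr_ge0.
have hS := sqr_sqrtr S0; have s0 := sqrtr_ge0 (b1 ^+ 2 + b2 ^+ 2).
move: (Num.sqrt _) hS s0 => S hS s0.
have a1 : (b1 * u + b2 * t) ^+ 2 <= (b1 ^+ 2 + b2 ^+ 2) * (u ^+ 2 + t ^+ 2).
  have := sqr_ge0 (b1 * t - b2 * u); nra.
have a2 : (b1 ^+ 2 + b2 ^+ 2) * (u ^+ 2 + t ^+ 2) <= (b1 ^+ 2 + b2 ^+ 2) * C ^+ 2.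
  exact: ler_wpM2l.
have : `|b1 * u + b2 * t| <= S * C.
  apply: abs_le_sq; first exact: mulr_ge0.
  by rewrite exprMn hS; apply: le_trans a1 a2.
by rewrite ger0_norm // addr_ge0 // mulr_ge0.
Qed.

Lemma lim_abs_le_ev (u : nat -> R) (l M : R) (d0 : nat) : u @ \oo --> l ->
  (forall n, (d0 <= n)%N -> `|u n| <= M) -> `|l| <= M.
Proof.
move=> hu hb; have cn : `|u n| @[n --> \oo] --> `|l| by exact: cvg_norm.
rewrite -(cvg_lim _ cn) //; apply: limr_le; first by apply/cvg_ex; exists `|l|.
exact: filterS (nbhs_infty_ge d0).
Qed.

Definition Bc (l : seq (R * X)) j := \sum_(p <- l) p.1 * e j p.2.

Lemma cvg_Bm l : (fun n => \sum_(0 <= j < n) sigma j * Bc l j * m j) @ \oo --> Delta (spanf k l).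
Proof.
rewrite Delta_spanf.
have E n : \sum_(0 <= j < n) sigma j * Bc l j * m j =
   \sum_(p <- l) p.1 * \sum_(0 <= j < n) sigma j * e j p.2 * m j.
  transitivity (\sum_(0 <= j < n) \sum_(p <- l) p.1 * (sigma j * e j p.2 * m j)).
    apply: eq_bigr => j _; rewrite /Bc -mulrA [_ * m j]mulrC !mulr_sumr; apply: eq_bigr => p _; ring.
  by rewrite exchange_big /=; apply: eq_bigr => p _; rewrite mulr_sumr.
under eq_fun do rewrite E.
apply: cvg_bigsum => p; apply: cvgM; first exact: cvg_cst.
exact: Delta_k_cvg.
Qed.

Lemma cvg_B2 l : (fun n => \sum_(0 <= j < n) sigma j * Bc l j ^+ 2) @ \oo -->
  ip (spanf k l) (spanf k l).
Proof.
rewrite (ip_spanf_l _ (H_spanf hR l)).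
have E n : \sum_(0 <= j < n) sigma j * Bc l j ^+ 2 =
   \sum_(p <- l) p.1 * \sum_(q <- l) q.1 * P n q.2 p.2.
  transitivity (\sum_(0 <= j < n) \sum_(p <- l) \sum_(q <- l) p.1 * (q.1 * (sigma j * e j q.2 * e j p.2))).
    apply: eq_bigr => j _; rewrite /Bc expr2 big_distrlr /= mulr_sumr; apply: eq_bigr => p _.
    rewrite mulr_sumr; apply: eq_bigr => q _; ring.
  rewrite exchange_big /=; apply: eq_bigr => p _; rewrite mulr_sumr.
  rewrite exchange_big /=; apply: eq_bigr => q _; rewrite /P !mulr_sumr.
  by apply: eq_bigr => j _.
under eq_fun do rewrite E.
apply: cvg_bigsum => p; apply: cvgM; first exact: cvg_cst.
rewrite /spanf; apply: cvg_bigsum => q; apply: cvgM; first exact: cvg_cst.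
rewrite /P; exact: (@hmer q.2 p.2).
Qed.

Lemma B2_le l n : \sum_(0 <= j < n) sigma j * Bc l j ^+ 2 <= ip (spanf k l) (spanf k l).
Proof.
have hom : {homo (fun n => \sum_(0 <= j < n) sigma j * Bc l j ^+ 2) : n m / (n <= m)%N >-> n <= m}.
  move=> a b ab; rewrite (big_cat_nat (leq0n a) ab) /= lerDl.
  by apply: sumr_ge0 => j _; rewrite mulr_ge0 ?sqr_ge0.
have hc : cvgn (fun n => \sum_(0 <= j < n) sigma j * Bc l j ^+ 2).
  by apply/cvg_ex; eexists; exact: cvg_B2.
have := nondecreasing_cvgn_le hom hc n.
by rewrite (cvg_lim _ (@cvg_B2 l)).
Qed.

Lemma part_cs (r : seq nat) (a b : nat -> R) :
  `|\sum_(j <- r) sigma j * a j * b j| <=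
  Num.sqrt (\sum_(j <- r) sigma j * a j ^+ 2) * Num.sqrt (\sum_(j <- r) sigma j * b j ^+ 2).
Proof.
have -> : \sum_(j <- r) sigma j * a j * b j =
   \sum_(j <- r) (Num.sqrt (sigma j) * a j) * (Num.sqrt (sigma j) * b j).
  by apply: eq_bigr => j _; rewrite mulrACA -expr2 (sqr_sqrtr (hs0 j)) mulrA.
have E (c : nat -> R) : \sum_(j <- r) (Num.sqrt (sigma j) * c j) ^+ 2 = \sum_(j <- r) sigma j * c j ^+ 2.
  by apply: eq_bigr => j _; rewrite exprMn (sqr_sqrtr (hs0 j)).
by rewrite -!E; exact: cs_sum_abs.
Qed.

Lemma span_bound l C : 0 <= C ->
  \sum_(0 <= j < d) sigma j * m j ^+ 2 + (Rint gt + \sum_(i < N) w i * gt (xs i)) ^+ 2 <= C ^+ 2 ->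
  `|Delta (spanf k l)| <= Num.sqrt (ip (spanf k l) (spanf k l)) * C.
Proof.
move=> C0 hC.
apply: (lim_abs_le_ev (d0 := d) (@cvg_Bm l)) => n dn.
rewrite (big_cat_nat (leq0n d) dn) /=.
pose T := Rint gt + \sum_(i < N) w i * gt (xs i).
have T0 : 0 <= T.
  apply: addr_ge0; first by apply: Rintegral_ge0 => y _; exact: gt_ge0.
  by apply: sumr_ge0 => i _; rewrite mulr_ge0 ?gt_ge0.
apply: le_trans (ler_normD _ _) _.
apply: le_trans (lerD (part_cs _ _ _) (part_cs _ _ _)) _.
set b1 := Num.sqrt (\sum_(0 <= j < d) _).
set u1 := Num.sqrt (\sum_(0 <= j < d) sigma j * m j ^+ 2).
set b2 := Num.sqrt (\sum_(d <= j < n) _).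
set t1 := Num.sqrt (\sum_(d <= j < n) sigma j * m j ^+ 2).
have g0 (r : seq nat) (c : nat -> R) : 0 <= \sum_(j <- r) sigma j * c j ^+ 2.
  by apply: sumr_ge0 => j _; rewrite mulr_ge0 ?sqr_ge0.
have ht1 : t1 <= T by exact: tail_bound.
apply: le_trans (_ : b1 * u1 + b2 * T <= _).
  by apply: lerD => //; apply: ler_wpM2l => //; exact: sqrtr_ge0.
have hu1 : u1 ^+ 2 + T ^+ 2 <= C ^+ 2 by rewrite /u1 sqr_sqrtr.
apply: le_trans (@comb_le b1 b2 u1 T C (sqrtr_ge0 _) (sqrtr_ge0 _) (sqrtr_ge0 _) T0 C0 hu1) _.
apply: ler_wpM2r => //.
rewrite /b1 /b2 !sqr_sqrtr // -big_cat_nat //= ler_sqrt; last exact: (ip_ge0 hR (H_spanf hR l)).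
exact: B2_le.
Qed.
Hypothesis hw1 : \sum_(i < N) w i = 1.

Lemma sum_sigma_cvg : (fun n => \sum_(0 <= j < n) sigma j) @ \oo --> Rint (fun y => k y y).
Proof.
have E n : \sum_(0 <= j < n) sigma j = Rint (Dg n).
  rewrite /Dg /P.
  have -> : (fun x => \sum_(0 <= j < n) sigma j * e j x * e j x) =
      (fun x => \sum_(j <- index_iota 0 n) sigma j * (e j x * e j x)).
    by apply: funext => x; apply: eq_bigr => j _; rewrite mulrA.
  have [_ ->] := @intg_sum _ (index_iota 0 n) (fun j y => sigma j * (e j y * e j y))
    (fun j => intgZ (sigma j) (intg_e2 j)).
  by apply: eq_bigr => j _; rewrite RintZ ?Rint_e2 ?mulr1 //; exact: intg_e2.
under eq_fun do rewrite E.
apply: (@Rint_cvg _ _ (kappa ^+ 2)).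
- exact: Dg_meas.
- exact: kdiag_meas.
- by move=> n y; rewrite ger0_norm ?Dg_ge0 //; apply: le_trans (Dg_le n y) (kxx_le y).
- by move=> y; rewrite /Dg /P; exact: (@hmer y y).
Qed.

Lemma Rint_gt_le : Rint gt <= Num.sqrt (fine (\sum_(d <= j <oo) (sigma j)%:E)%E).
Proof.
rewrite (ES _ sum_sigma_cvg) /=.
set K := Rint (fun y => k y y).
set G := Rint gt.
have intg_gt2 : intg (fun y => gt y ^+ 2).
  apply: (@bdd_intg _ (kappa ^+ 2)); first exact: measurable_funX gt_meas.
  move=> y; rewrite ger0_norm ?sqr_ge0 //.
  by rewrite gt_sq; apply: le_trans (kxx_le y); rewrite gerBl Dg_ge0.
have hg2 : Rint (fun y => gt y ^+ 2) = K - \sum_(0 <= j < d) sigma j.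
  have -> : (fun y => gt y ^+ 2) = (fun y => k y y - Dg d y) by apply: funext => y; rewrite gt_sq.
  rewrite /Rint RintegralB //.
  - congr (_ - _).
    have E : \sum_(0 <= j < d) sigma j = Rint (Dg d).
      rewrite /Dg /P.
      have -> : (fun x => \sum_(0 <= j < d) sigma j * e j x * e j x) =
          (fun x => \sum_(j <- index_iota 0 d) sigma j * (e j x * e j x)).
        by apply: funext => x; apply: eq_bigr => j _; rewrite mulrA.
      have [_ ->] := @intg_sum _ (index_iota 0 d) (fun j y => sigma j * (e j y * e j y))
        (fun j => intgZ (sigma j) (intg_e2 j)).
      by apply: eq_bigr => j _; rewrite RintZ ?Rint_e2 ?mulr1 //; exact: intg_e2.
    by rewrite E.
  - apply: (@bdd_intg _ (kappa ^+ 2)); first exact: kdiag_meas.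
    by move=> y; rewrite ger0_norm ?(kxx_ge0 hR) // kxx_le.
  - apply: (@bdd_intg _ (kappa ^+ 2)); first exact: Dg_meas.
    by move=> y; rewrite ger0_norm ?Dg_ge0 //; apply: le_trans (Dg_le d y) (kxx_le y).
rewrite -hg2.
have G0 : 0 <= G by apply: Rintegral_ge0 => y _; exact: gt_ge0.
have J : 0 <= Rint (fun y => (gt y - G) ^+ 2).
  by apply: Rintegral_ge0 => y _; exact: sqr_ge0.
have EJ : Rint (fun y => (gt y - G) ^+ 2) = Rint (fun y => gt y ^+ 2) - G ^+ 2.
  have -> : (fun y => (gt y - G) ^+ 2) = (fun y => gt y ^+ 2 + ((- (2 * G)) * gt y + G ^+ 2)).
    by apply: funext => y; ring.
  rewrite /Rint RintegralD //; last first.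
    by apply: intgD; [exact: intgZ intg_gt | exact: intg_cst].
  rewrite RintegralD //; last exact: intg_cst.
    have hc := Rint_cst (G ^+ 2); rewrite /Rint in hc; rewrite hc.
    rewrite RintegralZl //; last exact: intg_gt.
    have eG : Rintegral mu setT (fun x => gt x) = G by [].
    rewrite eG; ring.
  exact: intgZ intg_gt.
rewrite -(ger0_norm G0) -sqrtr_sqr ler_sqrt; first by rewrite -subr_ge0 -EJ.
by apply: Rintegral_ge0 => y _; exact: sqr_ge0.
Qed.
Lemma f_bound f C : H f -> ip f f <= 1 -> 0 <= C ->
  (forall l, `|Delta (spanf k l)| <= Num.sqrt (ip (spanf k l) (spanf k l)) * C) ->
  intg f /\ `|Delta f| <= C.
Proof.
move=> hf hf1 C0 hspan.
have kx x : k x x <= kappa ^+ 2 := kxx_le x.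
have ptw r l : (forall x, (f x - spanf k l x) ^+ 2 <= r ^+ 2 * k x x) -> 0 <= r ->
    forall x, `|f x - spanf k l x| <= r * kappa.
  move=> h r0 x; apply: abs_le_sq; first by rewrite mulr_ge0 // ltW.
  apply: le_trans (h x) _; rewrite exprMn; apply: ler_wpM2l; [exact: sqr_ge0 | exact: kx].
have [L hL] := choice (fun n => near_min hR hf (harmonic_gt0 n)).
have hfb x : `|f x| <= kappa.
  apply: abs_le_sq; first exact: ltW.
  apply: le_trans (f_sq_le hR x hf) _.
  rewrite -[X in _ <= X]mul1r; apply: ler_pM; [exact: (ip_ge0 hR hf) | exact: (kxx_ge0 hR) | exact: hf1 | exact: kx].
have mf : measurable_fun setT f.
  apply: (measurable_realfun.measurable_fun_cvg (h := fun n => spanf k (L n))).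
    by move=> n; apply: intg_meas; exact: intg_spanf.
  move=> x _; apply/(@cvgrPdist_le _ _ _ _ _ (fun n => spanf k (L n) x) (f x)) => eps e0.
  have hh : \forall n \near \oo, `|0 - (harmonic n : R)| <= eps / kappa.
    by move/cvgrPdist_le : (@cvg_harmonic R); apply; exact: divr_gt0.
  apply: (filterS _ hh) => n hn.
  have h1 := ptw _ _ (proj1 (hL n)) (harmonic_ge0 n) x.
  apply: le_trans h1 _.
  rewrite sub0r normrN ger0_norm ?harmonic_ge0 // in hn.
  by rewrite -ler_pdivlMr.
have intf : intg f by exact: bdd_intg mf hfb.
split => //.
apply/ler_addgt0Pr => z z0.
pose r := z / (2 * kappa + 2 * C + 1).
have den0 : 0 < 2 * kappa + 2 * C + 1 by rewrite ltr_wpDl // addr_ge0 // mulr_ge0 // ltW.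
have r0 : 0 < r by exact: divr_gt0.
have [l [h1 h2]] := near_min hR hf r0.
set s := spanf k l.
have ints : intg s by exact: intg_spanf.
have hfs := ptw _ _ h1 (ltW r0).
have ifs : intg (fun x => f x - s x).
  have e1 : (fun x => f x - s x) = f \+ (fun x => -1 * s x).
    by apply: funext => x /=; rewrite mulN1r.
  rewrite e1; exact: intgD intf (intgZ (-1) ints).
have eD : Delta f = Delta (fun x => f x - s x) + Delta s.
  rewrite /Delta /Rint RintegralB //.
  have -> : \sum_(i < N) w i * (f (xs i) - s (xs i)) =
     \sum_(i < N) w i * f (xs i) - \sum_(i < N) w i * s (xs i).
    by rewrite -sumrB; apply: eq_bigr => i _; rewrite mulrBr.
  ring.
have b1 : `|Delta (fun x => f x - s x)| <= 2 * (r * kappa).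
  rewrite /Delta mulr2n mulrDl mul1r; apply: le_trans (ler_normB _ _) _.
  apply: lerD.
    rewrite /Rint; apply: le_trans (le_normr_Rintegral _ _) _ => //.
    apply: le_trans (@le_Rintegral _ _ _ mu setT _ (fun _ => r * kappa) _ _ _ _) _ => //.
    all: try (by rewrite -/(Rint (fun _ => r * kappa)) Rint_cst).
    all: try (by move=> x _; exact: hfs).
    all: try exact: intg_cst.
    apply: (bdd_intg (M := r * kappa)).
      by apply: measurableT_comp => //; exact: intg_meas.
    by move=> x; rewrite normr_id hfs.
  apply: le_trans (ler_norm_sum _ _ _) _.
  apply: le_trans (_ : \sum_(i < N) w i * (r * kappa) <= _).
    apply: ler_sum => i _; rewrite normrM ger0_norm //; apply: ler_wpM2l => //; exact: hfs.
  by rewrite -mulr_suml hw1 mul1r.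
have hsq := sqrtr_ge0 (ip s s).
have hss : Num.sqrt (ip s s) <= 1 + 2 * r.
  have sq := sqr_sqrtr (ip_ge0 hR (H_spanf hR l)).
  move: h2 sq; rewrite -/s; move: (Num.sqrt (ip s s)) hsq => t t0 h2 sq.
  have h3 : t ^+ 2 <= 1 + 2 * r * t by rewrite sq; lra.
  nra.
have b2 : `|Delta s| <= (1 + 2 * r) * C.
  apply: le_trans (hspan l) _; exact: ler_wpM2r.
have hz : r * (2 * kappa + 2 * C) <= z.
  have -> : z = r * (2 * kappa + 2 * C + 1) by rewrite /r divfK // gt_eqF.
  rewrite ler_pM2l //; lra.
rewrite eD; apply: le_trans (ler_normD _ _) _.
have := lerD b1 b2; nra.
Qed.
Variable eps : R.
Hypothesis heps : 0 <= eps.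
Hypothesis heucl : eucl_norm d.+1 (fun j : 'I_d.+1 =>
      Rintegral mu setT (fun x => Psi sigma e d x j)
      - \sum_(i < N) w i * Psi sigma e d (xs i) j) <= eps.

Lemma eucl_sq : \sum_(0 <= j < d) sigma j * m j ^+ 2 + Delta gt ^+ 2 <= eps ^+ 2.
Proof.
pose v := fun j : 'I_d.+1 => Rintegral mu setT (fun x => Psi sigma e d x j)
      - \sum_(i < N) w i * Psi sigma e d (xs i) j.
have h : Num.sqrt (\sum_(i < d.+1) v i ^+ 2) <= eps by exact: heucl.
have S0 : 0 <= \sum_(i < d.+1) v i ^+ 2 by apply: sumr_ge0 => i _; exact: sqr_ge0.
have hS : \sum_(i < d.+1) v i ^+ 2 <= eps ^+ 2.
  have sq := sqr_sqrtr S0; have t0 := sqrtr_ge0 (\sum_(i < d.+1) v i ^+ 2).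
  move: h sq t0; move: (Num.sqrt _) => t h sq t0; rewrite -sq; nra.
have E1 (i : 'I_d) : v (widen_ord (leqnSn d) i) ^+ 2 = sigma i * m i ^+ 2.
  rewrite /v /Psi /= ltn_ord.
  have -> : Rintegral mu setT (fun x => Num.sqrt (sigma i) * e i x) = Num.sqrt (sigma i) * Rint (e i).
    by rewrite -/(Rint _) RintZ //; exact: intg_e.
  have -> : \sum_(n < N) w n * (Num.sqrt (sigma i) * e i (xs n)) =
     Num.sqrt (sigma i) * \sum_(n < N) w n * e i (xs n).
    by rewrite mulr_sumr; apply: eq_bigr => n _; ring.
  by rewrite -mulrBr exprMn sqr_sqrtr.
have E2 : v ord_max = Delta gt by rewrite /v /Psi /= ltnn.
move: hS; rewrite big_ord_recr /= E2.
under eq_bigr do rewrite E1.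
by rewrite -(big_mkord xpredT (fun j => sigma j * m j ^+ 2)).
Qed.

Lemma main_sec :
  (wce mu H ip w xs <= (2 * Rintegral mu setT (gtail sigma e d) + eps)%:E)%E /\
  2 * Rintegral mu setT (gtail sigma e d) + eps
    <= 2 * Num.sqrt (fine (\sum_(d <= j <oo) (sigma j)%:E)%E) + eps.
Proof.
have G0 : 0 <= Rint gt by apply: Rintegral_ge0 => y _; exact: gt_ge0.
split; last first.
  rewrite lerD2r ler_pM2l //; exact: Rint_gt_le.
set C := 2 * _ + eps.
have C0 : 0 <= C by rewrite addr_ge0 // mulr_ge0.
have hC : \sum_(0 <= j < d) sigma j * m j ^+ 2 +
    (Rint gt + \sum_(i < N) w i * gt (xs i)) ^+ 2 <= C ^+ 2.
  have h := eucl_sq.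
  have a0 : 0 <= \sum_(0 <= j < d) sigma j * m j ^+ 2.
    by apply: sumr_ge0 => j _; rewrite mulr_ge0 ?sqr_ge0.
  have hb : `|Delta gt| <= eps.
    apply: abs_le_sq => //; have := sqr_ge0 (Delta gt); lra.
  have eT : Rint gt + \sum_(i < N) w i * gt (xs i) = 2 * Rint gt - Delta gt.
    rewrite /Delta; ring.
  have eG : Rintegral mu setT (gtail sigma e d) = Rint gt by [].
  rewrite eT /C eG.
  move: h hb a0 G0.
  set b := Delta gt; set a := \sum_(0 <= j < d) _; set G := Rint gt.
  move=> h hb a0 G0.
  have hb' : - b <= eps by have := ler_norm (- b); rewrite normrN; lra.
  have hbe : 0 <= b + eps by lra.
  have := mulr_ge0 G0 hbe.
  nra.
apply: ge_ereal_sup => _ [f [hf hf1] <-].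
have [intf hD] := f_bound hf hf1 C0 (fun l => span_bound l C0 hC).
have -> : (\int[mu]_x (f x)%:E)%E = (Rint f)%:E.
  by rewrite /Rint /Rintegral fineK //; exact: integrable_fin_num.
by rewrite -EFinB abse_EFin lee_fin.
Qed.

End Main.

Theorem proposition5 (R : realType) (dX : measure_display) (X : measurableType dX)
  (mu : probability X R) (k : X -> X -> R)
  (H : set (X -> R)) (ip : (X -> R) -> (X -> R) -> R) (kappa : R)
  (sigma : nat -> R) (e : nat -> X -> R) (d : nat)
  (N : nat) (xs : 'I_N -> X) (w : 'I_N -> R) (eps : R) :
  pd_kernel k ->
  is_RKHS k H ip ->
  0 < kappa ->
  (forall x, Num.sqrt (k x x) <= kappa) ->
  (forall j, measurable_fun setT (e j)) ->
  (forall j, mu.-integrable setT (fun x => (e j x ^+ 2)%:E)) ->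
  (forall i j, (\int[mu]_x (e i x * e j x)%:E = ((i == j)%:R)%:E)%E) ->
  (forall j, 0 <= sigma j) ->
  (forall j, sigma j.+1 <= sigma j) ->
  (forall x y, (fun n => \sum_(0 <= j < n) sigma j * e j x * e j y) @ \oo --> k x y) ->
  (1 <= d)%N ->
  (forall i, 0 <= w i) ->
  \sum_(i < N) w i = 1 ->
  0 <= eps ->
  eucl_norm d.+1 (fun j : 'I_d.+1 =>
      Rintegral mu setT (fun x => Psi sigma e d x j)
      - \sum_(i < N) w i * Psi sigma e d (xs i) j) <= eps ->
  (wce mu H ip w xs <= (2 * Rintegral mu setT (gtail sigma e d) + eps)%:E)%E /\
  2 * Rintegral mu setT (gtail sigma e d) + eps
    <= 2 * Num.sqrt (fine (\sum_(d <= j <oo) (sigma j)%:E)%E) + eps.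
Proof.
move=> _ hR kap0 hk hem he2 hort hs0 _ hmer _ hw0 hw1 heps heucl.
exact: (main_sec hR kap0 hk hem he2 hort hs0 hmer hw0 hw1 heps heucl).
Qed.
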